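(* Let $\mathcal{G}\in\mathcal{G}_2^{sym}$. Then there exists a sequence $\mathcal{K}_1=\mathcal{G}^{(1)}\rightarrow\mathcal{G}^{(2)}\rightarrow\cdots\rightarrow\mathcal{G}^{(n)}=\mathcal{G}$ of elements of $\mathcal{G}_2^{sym}$ such that for all $2\le i\le n$, $\mathcal{G}^{(i)}$ is obtained from $\mathcal{G}^{(i-1)}$ by a symmetric $2$-tree $j$-extension for some $j\in\{0,1\}$.
   Context: A multi-graph is finite and loop-free, possibly with parallel edges. A $2$-tree decomposition is $(G;T_1,T_2)$ with $G$ a multi-graph and $T_1,T_2$ spanning trees of $G$ whose edge sets partition $E(G)$. Let $\mathbb{Z}_2=\langle s\rangle$. A $\mathbb{Z}_2$-symmetric multi-graph is a pair $(G,\theta)$ with $\theta:\mathbb{Z}_2\to\mathrm{Aut}(G)$ a non-trivial homomorphism; write $s_\theta=\theta(s)$ and for an edge $e=v_1v_2$, $s_\theta(e)=s_\theta(v_1)s_\theta(v_2)$. A vertex $v$ (edge $e$) is fixed if $s_\theta(v)=v$ ($s_\theta(e)=e$). A symmetric $2$-tree decomposition is $(G;T_1,T_2;\theta)$ where $(G;T_1,T_2)$ is a $2$-tree decomposition, $(G,\theta)$ is $\mathbb{Z}_2$-symmetric and $s_\theta(T_i)=T_i$ for $i=1,2$. $\mathcal{G}_2^{sym}$ denotes the set of symmetric $2$-tree decompositions with no fixed edges, together with $\mathcal{K}_1=(K_1;T_1,T_2;\theta)$ where $K_1$ is a single vertex, the $T_i$ are edgeless and $\theta$ is trivial. For $d\in\{1,2\}$: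 $(G',\theta')$ is obtained from $(G,\theta)$ by a symmetric $d$-dimensional $0$-extension if $V(G')=V(G)\cup\{v,s_{\theta'}(v)\}$ with $v,s_{\theta'}(v)\notin V(G)$ distinct, $s_{\theta'}|_{V(G)}=s_\theta$, and $E(G')=E(G)+\{vv_i,s_{\theta'}(vv_i):i=1,\dots,d\}$ for some not necessarily distinct $v_1,\dots,v_d\in V(G)$; it is obtained by a symmetric $d$-dimensional $1$-extension if the first two conditions hold and there are $v_1,\dots,v_{d+1}\in V(G)$ with $e=v_1v_2\in E(G)$ (otherwise not necessarily distinct) such that $E(G')=E(G)-\{e,s_\theta(e)\}+\{vv_i,s_{\theta'}(vv_i):i=1,\dots,d+1\}$. A symmetric $2$-tree decomposition $(G';T_1',T_2';\theta')$ is obtained from $(G;T_1,T_2;\theta)$ by a symmetric $2$-tree $j$-extension ($j\in\{0,1\}$) if $(G',\theta')$ is obtained from $(G,\theta)$ by a symmetric $2$-dimensional $j$-extension and, for $i=1,2$, $(T_i',\theta')$ is obtained from $(T_i,\theta)$ (with the restricted automorphisms) by a symmetric $1$-dimensional $k_i$-extension with the same new vertices, where $k_i\in\{0,1\}$ and $k_1+k_2=j$. *)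

(* Defs.v *)
From mathcomp Require Import all_boot.
Set Implicit Arguments.
Unset Strict Implicit.
Unset Printing Implicit Defensive.

(* Edges are 2-element subsets {u,v} of the vertex type T. *)

Definition tadj (T : finType) (E : {set {set T}}) : rel T :=
  fun u v => [set u; v] \in E.

Definition is_tree (T : finType) (V : {set T}) (E : {set {set T}}) : Prop :=
  V != set0 /\
  (forall e : {set T}, e \in E -> (#|e| == 2) && (e \subset V)) /\
  {in V &, forall u v, connect (tadj E) u v} /\
  (forall c : seq T, uniq c -> 2 < size c -> ~~ cycle (tadj E) c).

(* A candidate symmetric 2-tree decomposition (G;T1,T2;theta):
   vertex set V(G), the involution s_theta (as a map on vertices),
   and the edge sets of the two trees.  The multigraph G is the edge-disjoint
   union of T1 and T2, i.e. its edge multiset is T1 + T2. *)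
Record sd (T : finType) := SD {
  sV : {set T};
  ss : T -> T;
  sT1 : {set {set T}};
  sT2 : {set {set T}} }.

Definition multG (T : finType) (D : sd T) (x : {set T}) : nat :=
  (x \in sT1 D) + (x \in sT2 D).

Definition mT (T : finType) (E : {set {set T}}) (x : {set T}) : nat :=
  x \in E.

(* symmetric 2-tree decomposition: T1,T2 spanning trees of G,
   theta : Z2 -> Aut(G) a non-trivial homomorphism (s_theta an involutive
   automorphism of G, different from the identity), s_theta(T_i) = T_i. *)
Definition is_sym_2tree (T : finType) (D : sd T) : Prop :=
  is_tree (sV D) (sT1 D) /\ is_tree (sV D) (sT2 D) /\
  {in sV D, forall x, ss D x \in sV D} /\
  {in sV D, forall x, ss D (ss D x) = x} /\
  (exists2 x : T, x \in sV D & ss D x != x) /\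
  (forall e : {set T}, e \subset sV D -> multG D (ss D @: e) = multG D e) /\
  [set ss D @: e | e : {set T} in sT1 D] = sT1 D /\
  [set ss D @: e | e : {set T} in sT2 D] = sT2 D.

Definition no_fixed_edges (T : finType) (D : sd T) : Prop :=
  forall e : {set T}, e \in sT1 D :|: sT2 D -> ss D @: e != e.

Definition is_K1 (T : finType) (D : sd T) : Prop :=
  exists x, sV D = [set x] /\ sT1 D = set0 /\ sT2 D = set0 /\ ss D x = x.

Definition in_G2sym (T : finType) (D : sd T) : Prop :=
  (is_sym_2tree D /\ no_fixed_edges D) \/ is_K1 D.

(* (V',s',m') is obtained from (V,s,m) by a symmetric d-dimensional
   j-extension (j = 0 or 1), where m, m' are edge multiplicity functions.
   ws = [v_1; ...; v_(d+j)];  for j = 1, e = v_1 v_2 must be an edge and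
   the edges {e, s(e)} are removed. *)
Definition sym_ext (T : finType) (d j : nat) (V : {set T}) (s : T -> T)
    (m : {set T} -> nat) (V' : {set T}) (s' : T -> T) (m' : {set T} -> nat)
    : Prop :=
  exists (v : T) (ws : seq T),
    v \notin V /\ s' v \notin V /\ s' v != v /\
    V' = V :|: [set v; s' v] /\ {in V, s' =1 s} /\
    size ws = d + j /\ all (fun w => w \in V) ws /\
    let A := flatten [seq [:: [set v; w]; [set s' v; s' w]] | w <- ws] in
    let e := [set nth v ws 0; nth v ws 1] in
    let R := if j == 0 then [::] else undup [:: e; s @: e] in
    (j != 0 -> 0 < m e) /\
    (forall x, m' x + count_mem x R = m x + count_mem x A).

Definition sym_2tree_ext (T : finType) (j : nat) (D D' : sd T) : Prop :=
  exists k1 k2 : nat, k1 <= 1 /\ k2 <= 1 /\ k1 + k2 = j /\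
    sym_ext 2 j (sV D) (ss D) (multG D) (sV D') (ss D') (multG D') /\
    sym_ext 1 k1 (sV D) (ss D) (mT (sT1 D)) (sV D') (ss D') (mT (sT1 D')) /\
    sym_ext 1 k2 (sV D) (ss D) (mT (sT2 D)) (sV D') (ss D') (mT (sT2 D')).

Definition sd_eq (T : finType) (D D' : sd T) : Prop :=
  sV D = sV D' /\ {in sV D, ss D =1 ss D'} /\
  sT1 D = sT1 D' /\ sT2 D = sT2 D'.

(* Main.v *)
Require Import Defs.
From mathcomp Require Import all_boot zify.
Set Implicit Arguments.
Unset Strict Implicit.
Unset Printing Implicit Defensive.

Lemma tadjC (T : finType) (E : {set {set T}}) a b : tadj E a b = tadj E b a.
Proof. by rewrite /tadj setUC. Qed.

Lemma tadj_sym (T : finType) (E : {set {set T}}) : symmetric (tadj E).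
Proof. by move=> a b; rewrite tadjC. Qed.

Lemma set2_eq (T : finType) (a b c d : T) :
  [set a; b] = [set c; d] -> (a = c /\ b = d) \/ (a = d /\ b = c).
Proof.
move=> E.
have ha : a \in [set c; d] by rewrite -E !inE eqxx.
have hb : b \in [set c; d] by rewrite -E !inE eqxx orbT.
have hc : c \in [set a; b] by rewrite E !inE eqxx.
have hd : d \in [set a; b] by rewrite E !inE eqxx orbT.
move: ha hb hc hd; rewrite !inE.
case/orP=> /eqP ha; case/orP=> /eqP hb; subst; auto;
  case/orP=> /eqP hc; case/orP=> /eqP hd; subst; auto.
Qed.

Lemma imset_set2 (T : finType) (f : T -> T) a b : f @: [set a; b] = [set f a; f b].
Proof. by rewrite imsetU1 imset_set1. Qed.

Lemma pair_of_card2 (T : finType) (e : {set T}) v :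
  #|e| == 2 -> v \in e -> exists w, e = [set v; w] /\ v != w.
Proof.
case/cards2P=> [x [y [xy ->]]]; rewrite !inE => /orP[]/eqP->.
  by exists y.
by exists x; split; [rewrite setUC | rewrite eq_sym].
Qed.

Lemma set2_neq (T : finType) (a b : T) : #|[set a; b]| == 2 -> a != b.
Proof. by rewrite cards2; case: (a != b). Qed.

Lemma imset_invol (T : finType) (V e : {set T}) (s : T -> T) :
  {in V, forall x, s (s x) = x} -> e \subset V -> s @: (s @: e) = e.
Proof.
move=> inv sub; rewrite -imset_comp; apply/setP=> x.
apply/imsetP/idP.
  by case=> y ye ->; rewrite /= inv // (subsetP sub).
by move=> xe; exists x => //=; rewrite inv // (subsetP sub).
Qed.

Lemma connect_map (T : finType) (e e' : rel T) (f : T -> T) x y :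
  (forall a b, e a b -> connect e' (f a) (f b)) ->
  connect e x y -> connect e' (f x) (f y).
Proof.
move=> H /connectP[p]; elim: p x => [|z p IH] x /=.
  by move=> _ ->.
case/andP=> exz pz ly; apply: connect_trans (H _ _ exz) (IH _ pz ly).
Qed.

Lemma connectC (T : finType) (E : {set {set T}}) x y :
  connect (tadj E) x y = connect (tadj E) y x.
Proof. exact: (sym_connect_sym (tadj_sym E)). Qed.

Definition edges_ok (T : finType) (V : {set T}) (E : {set {set T}}) :=
  forall e, e \in E -> (#|e| == 2) && (e \subset V).

Definition acycB (T : finType) (E : {set {set T}}) :=
  forall a b, [set a; b] \in E -> ~~ connect (tadj (E :\ [set a; b])) a b.

Definition nocyc (T : finType) (E : {set {set T}}) :=
  forall c : seq T, uniq c -> 2 < size c -> ~~ cycle (tadj E) c.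

Definition tree' (T : finType) (V : {set T}) (E : {set {set T}}) :=
  V != set0 /\ edges_ok V E /\ {in V &, forall u v, connect (tadj E) u v} /\ acycB E.

Lemma tadjD (T : finType) (E : {set {set T}}) x u w :
  tadj (E :\ x) u w -> tadj E u w.
Proof. by rewrite /tadj !inE => /andP[]. Qed.

Lemma edge_neq (T : finType) (V : {set T}) (E : {set {set T}}) a b :
  edges_ok V E -> [set a; b] \in E -> a != b.
Proof. by move=> ok /ok /andP[/set2_neq]. Qed.

Lemma nocyc_acycB (T : finType) (V : {set T}) (E : {set {set T}}) :
  edges_ok V E -> nocyc E -> acycB E.
Proof.
move=> ok nc a b ab; apply/negP => /connectP[p pth].
have anb := edge_neq ok ab.
case/shortenP: pth => p' pth' uq _ lst.
case: p' pth' uq lst => [|y [|z q]] /=.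
- by move=> _ _ ba; rewrite ba eqxx in anb.
- by move=> /andP[h _] _ ba; move: h; rewrite -ba /tadj !inE eqxx.
move=> pth uq lst.
have := nc (a :: y :: z :: q) uq isT; apply/negP; apply/negPn.
rewrite /cycle rcons_path; apply/andP; split.
  have pth' : path (tadj (E :\ [set a; b])) a [:: y, z & q] by [].
  by apply: sub_path pth' => u w /tadjD.
by rewrite /= -lst /tadj setUC.
Qed.

Lemma acycB_nocyc (T : finType) (V : {set T}) (E : {set {set T}}) :
  edges_ok V E -> acycB E -> nocyc E.
Proof.
move=> ok ac [|x [|y q]] // uq sz; apply/negP.
rewrite /cycle rcons_path => /andP[/andP[exy pq] ebx].
move: uq; rewrite /= !inE negb_or => /andP[/andP[xy xq] /andP[yq uq]].
have xb : [set x; last y q] \in E by rewrite setUC.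
apply: (negP (ac x _ xb)); apply/connectP; exists (y :: q); last by [].
rewrite /=; apply/andP; split.
  move: exy; rewrite /tadj !inE => ->; rewrite andbT; apply/negP.
  move=> /eqP/set2_eq [[_ yb]|[xb' _]].
    move: sz yq yb; case: q {pq ebx xb xq uq} => [//|z q'] _ yq /= yb.
    by move: (mem_last z q'); rewrite -yb (negbTE yq).
  by move: (mem_last y q); rewrite -xb' inE (negbTE xy) (negbTE xq).
apply: (sub_in_path (P := mem (y :: q)) (e := tadj E)) => //.
  move=> u w ui wi euw; rewrite /tadj in euw; rewrite /tadj !inE euw andbT.
  apply/negP => /eqP E'; have : x \in [set u; w] by rewrite E' !inE eqxx.
  rewrite !inE => /orP[]/eqP xe; subst.
    by move: ui; rewrite inE (negbTE xy) (negbTE xq).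
  by move: wi; rewrite inE (negbTE xy) (negbTE xq).
by apply/allP => u.
Qed.

Lemma tree_tree' (T : finType) (V : {set T}) (E : {set {set T}}) :
  is_tree V E <-> tree' V E.
Proof.
split.
  case=> [nz [ok [cn nc]]]; do 3 split => //; exact: nocyc_acycB ok nc.
case=> [nz [ok [cn ac]]]; do 3 split => //; exact: acycB_nocyc ok ac.
Qed.

Lemma connect_subset (T : finType) (E1 E2 : {set {set T}}) a b :
  (forall x, x \in E1 -> x \in E2) ->
  connect (tadj E1) a b -> connect (tadj E2) a b.
Proof.
move=> sub; apply: (connect_map (f := id)) => x y /sub h; exact: connect1.
Qed.

Lemma edge_sub (T : finType) (V : {set T}) (E : {set {set T}}) a b :
  edges_ok V E -> [set a; b] \in E -> (a \in V) && (b \in V).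
Proof.
move=> ok /ok /andP[_ /subsetP s].
by rewrite !s // !inE eqxx ?orbT.
Qed.

Lemma leaf_remove (T : finType) (V : {set T}) (E : {set {set T}}) u w :
  tree' V E -> [set u; w] \in E ->
  (forall e, e \in E -> u \in e -> e = [set u; w]) ->
  tree' (V :\ u) (E :\ [set u; w]).
Proof.
case=> [nz [ok [cn ac]]] uw leaf.
have uw' := edge_neq ok uw.
case/andP: (edge_sub ok uw) => uV wV.
have nu : forall e, e \in E :\ [set u; w] -> u \notin e.
  move=> e; rewrite !inE => /andP[ne eE]; apply/negP => ue.
  by rewrite (leaf e eE ue) eqxx in ne.
split; first by apply/set0Pn; exists w; rewrite !inE eq_sym uw' wV.
split.
  move=> e eE'; have := nu e eE'; move: eE'; rewrite !inE => /andP[_ /ok /andP[-> sV]] ue.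
  apply/subsetP => z ze; rewrite !inE (subsetP sV _ ze) andbT.
  by apply/negP => /eqP zu; rewrite -zu ze in ue.
split.
  move=> x y; rewrite !inE => /andP[xu xV] /andP[yu yV].
  have := connect_map (f := fun z => if z == u then w else z) _ (cn x y xV yV).
  rewrite (negbTE xu) (negbTE yu); apply.
  move=> a b eab.
  have ab_u : forall a b, tadj E a b -> a = u -> b = w.
    move=> a' b' e' au; rewrite /tadj au in e'.
    have := leaf _ e' (setU11 _ _).
    case/set2_eq => [[_ ->]//|[uw2 _]]; by rewrite uw2 eqxx in uw'.
  case: (eqVneq a u) => [au|au].
    have wu : (w == u) = false by apply/negbTE; rewrite eq_sym.
    move: eab; rewrite au => eab.
    by rewrite (ab_u _ _ eab erefl); case: ifP => _; apply: connect0.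
  case: (eqVneq b u) => [bu|bu].
    rewrite tadjC in eab.
    by rewrite (ab_u _ _ eab bu); apply: connect0.
  apply: connect1; rewrite /tadj !inE; rewrite /tadj in eab; rewrite eab andbT.
  apply/negP => /eqP/set2_eq[[au' _]|[_ bu']]; first by rewrite au' eqxx in au.
  by rewrite bu' eqxx in bu.
move=> a b; rewrite !inE => /andP[_ abE]; apply/negP => C.
apply: (negP (ac a b abE)); apply: connect_subset C => x; rewrite !inE.
by case/andP=> -> /andP[].
Qed.

Lemma triangle (T : finType) (V : {set T}) (E : {set {set T}}) a b c :
  tree' V E -> [set a; b] \in E -> [set b; c] \in E -> [set a; c] \in E -> False.
Proof.
case=> [_ [ok [_ ac]]] ab bc acE.
have nab := edge_neq ok ab; have nbc := edge_neq ok bc.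
apply: (negP (ac a c acE)).
apply: (connect_trans (y := b)); apply: connect1; rewrite /tadj !inE ?ab ?bc andbT;
  apply/negP => /eqP/set2_eq.
  by case=> [[_ bc']|[ac' ba]]; [rewrite bc' eqxx in nbc | rewrite ba eqxx in nab].
by case=> [[ba _]|[bc' _]]; [rewrite ba eqxx in nab | rewrite bc' eqxx in nbc].
Qed.

Lemma contract (T : finType) (V : {set T}) (E : {set {set T}}) v b c :
  tree' V E -> b != c -> [set v; b] \in E -> [set v; c] \in E ->
  (forall e, e \in E -> v \in e -> e = [set v; b] \/ e = [set v; c]) ->
  tree' (V :\ v) ((E :\ [set v; b] :\ [set v; c]) :|: [set [set b; c]]).
Proof.
move=> tr; case: (tr) => [nz [ok [cn ac]]] bc vb vc deg2.
have nvb := edge_neq ok vb; have nvc := edge_neq ok vc.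
case/andP: (edge_sub ok vb) => vV bV; case/andP: (edge_sub ok vc) => _ cV.
have nv : forall e, e \in E -> e != [set v; b] -> e != [set v; c] -> v \notin e.
  move=> e eE n1 n2; apply/negP => ve.
  by case: (deg2 e eE ve) => eq; [rewrite eq eqxx in n1 | rewrite eq eqxx in n2].
have nb : forall z, [set v; z] \in E -> z = b \/ z = c.
  move=> z zE; case: (deg2 _ zE (setU11 _ _)) => /set2_eq.
    by case=> [[_ ->]|[vb' _]]; [left | rewrite vb' eqxx in nvb].
  by case=> [[_ ->]|[vc' _]]; [right | rewrite vc' eqxx in nvc].
have bcE : [set b; c] \notin E.
  by apply/negP => h; apply: (triangle tr vb h vc).
have bv : b != v by rewrite eq_sym.
have cv : c != v by rewrite eq_sym.
set E' := (E :\ [set v; b] :\ [set v; c]) :|: [set [set b; c]].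
have memE' : forall x, (x \in E') =
    ((x != [set v; c]) && (x != [set v; b]) && (x \in E)) || (x == [set b; c]).
  by move=> x; rewrite /E' !inE andbA.
split; first by apply/set0Pn; exists b; rewrite !inE bv bV.
split.
  move=> e; rewrite memE' => /orP[/andP[/andP[n2 n1] eE]|/eqP->].
    case/andP: (ok e eE) => -> sV /=.
    apply/subsetP => z ze; rewrite !inE (subsetP sV _ ze) andbT.
    by apply/negP => /eqP zv; move: (nv e eE n1 n2); rewrite -zv ze.
  rewrite cards2 bc /=; apply/subsetP => z; rewrite !inE.
  by case/orP=> /eqP->; rewrite ?bv ?cv ?bV ?cV.
have bcE' : tadj E' b c by rewrite /tadj memE' eqxx orbT.
split.
  move=> x y; rewrite !inE => /andP[xv xV] /andP[yv yV].
  have := connect_map (f := fun z => if z == v then b else z) _ (cn x y xV yV).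
  rewrite (negbTE xv) (negbTE yv); apply.
  move=> a a' eaa.
  case: (eqVneq a v) => [av|av].
    rewrite /tadj av in eaa; case: (nb _ eaa) => ->; rewrite ?eqxx ?(negbTE bv).
      exact: connect0.
    by rewrite ?eqxx ?(negbTE cv); apply: connect1.
  case: (eqVneq a' v) => [av'|av'].
    rewrite tadjC /tadj av' in eaa; case: (nb _ eaa) => ->; rewrite ?eqxx ?(negbTE bv).
      exact: connect0.
    by rewrite ?eqxx ?(negbTE cv); apply: connect1; rewrite tadjC.
  apply: connect1; rewrite /tadj memE'; rewrite /tadj in eaa; rewrite eaa andbT.
  apply/orP; left; apply/andP; split; apply/negP => /eqP/set2_eq;
    case=> [[h _]|[_ h]]; by rewrite ?h eqxx in av av'.
move=> a a'; rewrite memE' => /orP[/andP[/andP[n2 n1] eE]|/eqP eq].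
  apply/negP => C; apply: (negP (ac a a' eE)).
  have vn := nv _ eE n1 n2.
  have vz : forall z, z \in [:: b; c] -> tadj (E :\ [set a; a']) z v.
    move=> z; rewrite !inE => zbc; rewrite /tadj !inE setUC.
    apply/andP; split.
      by apply/negP => /eqP h; move: vn; rewrite -h setU11.
    by case/orP: zbc => /eqP->.
  apply: (connect_map (f := id) _ C) => x y; rewrite /tadj in_setD1.
  case/andP=> nxy; rewrite memE' => /orP[/andP[_ xyE]|/eqP/set2_eq h].
    by apply: connect1; rewrite /tadj !inE nxy xyE.
  have [hx hy] : x \in [:: b; c] /\ y \in [:: b; c].
    by case: h => [[-> ->]|[-> ->]]; rewrite !inE !eqxx ?orbT.
  apply: (connect_trans (y := v)); apply: connect1; first exact: vz.
  by move: (vz y hy); rewrite /tadj setUC.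
apply/negP => C.
have C' : connect (tadj (E :\ [set v; b])) a a'.
  apply: connect_subset C => x; rewrite in_setD1 => /andP[nx]; rewrite memE'.
  case/orP => [/andP[/andP[_ n1] xE]|/eqP xbc]; first by rewrite in_setD1 n1 xE.
  by rewrite xbc eq eqxx in nx.
have C2 : connect (tadj (E :\ [set v; b])) b c.
  by move: C'; case/set2_eq: eq => [[-> ->]|[-> ->]] //; rewrite connectC.
apply: (negP (ac v b vb)); rewrite connectC.
apply: (connect_trans C2); apply: connect1.
rewrite /tadj !inE setUC vc andbT; apply/negP => /eqP/set2_eq.
by case=> [[_ cb]|[vb' _]]; [rewrite cb eqxx in bc | rewrite vb' eqxx in nvb].
Qed.

Lemma path_suffix (T : eqType) (e : rel T) x p s1 z t :
  x :: p = s1 ++ z :: t -> path e x p -> path e z t.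
Proof.
case: s1 => [[-> ->] //|x' s1' [-> ->]].
by rewrite cat_path => /andP[_ /= /andP[]].
Qed.

Lemma uniq_size_le (T : finType) (s : seq T) : uniq s -> size s <= #|T|.
Proof. by move/card_uniqP <-; apply: max_card. Qed.

Lemma leaf_path (T : finType) (V : {set T}) (E : {set {set T}}) :
  tree' V E -> forall k x p, #|T| <= size p + k -> p != [::] ->
  uniq (x :: p) -> path (tadj E) x p ->
  exists u w, [set u; w] \in E /\ (forall e, e \in E -> u \in e -> e = [set u; w]).
Proof.
move=> tr; case: (tr) => [_ [ok [_ ac]]].
have nc := acycB_nocyc ok ac.
elim=> [|k IH] x p.
  rewrite addn0 => le _ uq _.
  by have := uniq_size_le uq; rewrite /= ltnNge le.
move=> le pn uq pth.
case: (pickP (fun z => tadj E (last x p) z && (z \notin x :: p))) => [z /andP[ez zn]|none].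
  apply: (IH x (rcons p z)).
  - by rewrite size_rcons addSnnS.
  - by case: (p).
  - by rewrite -rcons_cons rcons_uniq zn uq.
  - by rewrite rcons_path pth ez.
move: pn uq pth none; case/lastP: p {le IH} => [//|p1 u] _ uq pth none.
rewrite last_rcons in none.
have pu : tadj E (last x p1) u by move: pth; rewrite rcons_path => /andP[].
exists u, (last x p1); split; first by rewrite setUC.
move=> e eE ue.
case/andP: (ok e eE) => e2 _.
case: (pair_of_card2 e2 ue) => z [ez uz].
have zin : z \in x :: rcons p1 u.
  by have := none z; rewrite /tadj -ez eE /= => /negbFE.
have zp1 : z \in x :: p1.
  move: zin; rewrite -rcons_cons mem_rcons inE => /orP[/eqP zu|//].
  by rewrite zu eqxx in uz.
have [s1 [s2 eq]] : exists s1 s2, x :: p1 = s1 ++ z :: s2.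
  by case/splitPr: zp1 => s1 s2; exists s1, s2.
case: s2 eq => [|y s2] eq.
  by rewrite ez; congr [set u; _]; rewrite -[last x p1]/(last x (x :: p1)) eq last_cat.
exfalso.
have eq' : x :: rcons p1 u = s1 ++ z :: y :: rcons s2 u.
  by rewrite -rcons_cons eq rcons_cat.
have pz := path_suffix eq' pth.
have uz' : uniq (z :: y :: rcons s2 u).
  by move: uq; rewrite eq' cat_uniq => /and3P[_ _].
have := nc (z :: y :: rcons s2 u) uz'; rewrite /= size_rcons => /(_ isT).
apply/negP/negPn; rewrite /cycle rcons_path; move: pz => /= /andP[-> ->] /=; rewrite last_rcons.
by rewrite /tadj -ez.
Qed.

Lemma leaf_exists (T : finType) (V : {set T}) (E : {set {set T}}) :
  tree' V E -> 1 < #|V| ->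
  exists u w, [set u; w] \in E /\ (forall e, e \in E -> u \in e -> e = [set u; w]).
Proof.
move=> tr; case: (tr) => [_ [ok [cn _]]] /card_gt1P [x [y [xV yV xy]]].
case/connectP: (cn x y xV yV) => [[|z p] /= pth ly].
  by rewrite ly eqxx in xy.
case/andP: pth => exz _.
have xz : x != z by apply: (edge_neq ok exz).
apply: (leaf_path tr (k := #|T|) (x := x) (p := [:: z])) => //=.
- by rewrite inE xz.
- by rewrite exz.
Qed.

Lemma tree_card_aux (T : finType) n : forall (V : {set T}) (E : {set {set T}}),
  #|V| <= n -> tree' V E -> #|E| = #|V|.-1.
Proof.
elim: n => [|n IH] V E.
  by rewrite leqn0 cards_eq0 => /eqP-> [nz]; rewrite eqxx in nz.
move=> le tr; case: (tr) => [nz [ok _]].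
case: (leqP #|V| 1) => [le1|gt1].
  have -> : #|E| = 0.
    apply/eqP; rewrite cards_eq0; apply/eqP/setP => e; rewrite inE.
    apply/negP => eE; case/andP: (ok e eE) => /eqP e2 /subset_leq_card.
    by rewrite e2 => h; have := leq_trans h le1.
  have : 0 < #|V| by rewrite card_gt0.
  by case: #|V| le1 => [|[]].
case: (leaf_exists tr gt1) => u [w [uw leaf]].
have tr' := leaf_remove tr uw leaf.
case/andP: (edge_sub ok uw) => uV _.
have cV := cardsD1 u V; have cE := cardsD1 [set u; w] E.
rewrite uV in cV; rewrite uw in cE.
have le' : #|V :\ u| <= n by move: le; rewrite cV.
have h := IH _ _ le' tr'.
rewrite cE h cV; move: gt1; rewrite cV; lia.
Qed.

Lemma tree_card (T : finType) (V : {set T}) (E : {set {set T}}) :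
  tree' V E -> #|E| = #|V|.-1.
Proof. exact: tree_card_aux (leqnn _). Qed.

Definition deg (T : finType) (E : {set {set T}}) (v : T) := #|[set e in E | v \in e]|.

Lemma degE (T : finType) (E : {set {set T}}) v : deg E v = \sum_(e in E) (v \in e).
Proof.
rewrite /deg -sum1_card (eq_bigl (fun e => (e \in E) && (v \in e))); last first.
  by move=> e; rewrite inE.
by rewrite big_mkcondr /=; apply: eq_bigr => e _; case: (v \in e).
Qed.

Lemma deg_sum (T : finType) (V : {set T}) (E : {set {set T}}) :
  edges_ok V E -> \sum_(v in V) deg E v = 2 * #|E|.
Proof.
move=> ok.
rewrite (eq_bigr (fun v => \sum_(e in E) (v \in e))); last by move=> v _; rewrite degE.
rewrite exchange_big /= (eq_bigr (fun _ => 2)); first by rewrite sum_nat_const mulnC.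
move=> e eE; case/andP: (ok e eE) => /eqP e2 sV.
rewrite -big_mkcondr /= sum1_card -e2; apply: eq_card => v.
rewrite unfold_in /=; apply/andP/idP => [[]//|ve]; split => //; exact: (subsetP sV).
Qed.

Definition symt (T : finType) (V : {set T}) (E : {set {set T}}) (s : T -> T) :=
  tree' V E /\ {in V, forall x, s x \in V} /\ {in V, forall x, s (s x) = x} /\
  (forall e, e \in E -> s @: e \in E) /\ (forall e, e \in E -> s @: e != e).

Lemma inv_neq (T : finType) (V : {set T}) (s : T -> T) x y :
  {in V, forall x, s (s x) = x} -> x \in V -> y \in V -> (s x == s y) = (x == y).
Proof.
move=> inv xV yV; apply/eqP/eqP => [h|->//].
by rewrite -(inv x xV) h inv.
Qed.

Lemma symV2 (T : finType) (V : {set T}) (s : T -> T) u :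
  {in V, forall x, s x \in V} -> {in V, forall x, s (s x) = x} -> u \in V ->
  {in V :\ u :\ s u, forall x, s x \in V :\ u :\ s u}.
Proof.
move=> sV inv uV x; rewrite !inE => /and3P[xsu xu xV].
have suV := sV u uV.
rewrite sV // andbT.
rewrite (inv_neq inv xV uV) xu /=.
by rewrite -{1}(inv u uV) (inv_neq inv xV suV).
Qed.

Lemma sym_leaf (T : finType) (V : {set T}) (E : {set {set T}}) (s : T -> T) u w :
  symt V E s -> [set u; w] \in E ->
  (forall e, e \in E -> u \in e -> e = [set u; w]) ->
  [/\ s u != u, w != s u, [set s u; s w] \in E, [set s u; s w] != [set u; w] &
     symt (V :\ u :\ s u) (E :\ [set u; w] :\ [set s u; s w]) s].
Proof.
case=> [tr [sV [inv [cl nf]]]] uw leaf.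
case: (tr) => [_ [ok _]].
have nuw := edge_neq ok uw; case/andP: (edge_sub ok uw) => uV wV.
have suu : s u != u.
  apply/negP => /eqP suu.
  have := cl _ uw; rewrite imset_set2 suu => h.
  have := nf _ uw; rewrite imset_set2 suu (leaf _ h (setU11 _ _)).
  by rewrite eqxx.
have wsu : w != s u.
  apply/negP => /eqP wsu.
  have := nf _ uw; rewrite imset_set2 wsu inv // setUC -wsu.
  by rewrite eqxx.
have Es : [set s u; s w] \in E by rewrite -imset_set2 cl.
have neq : [set s u; s w] != [set u; w] by rewrite -imset_set2 nf.
split => //.
have tr1 := leaf_remove tr uw leaf.
have ssw1 : [set s u; s w] \in E :\ [set u; w] by rewrite in_setD1 neq Es.
have leaf2 : forall e, e \in E :\ [set u; w] -> s u \in e -> e = [set s u; s w].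
  move=> e; rewrite in_setD1 => /andP[_ eE] sue.
  have sE := cl _ eE.
  have usE : u \in s @: e by rewrite -(inv u uV); apply: imset_f.
  have eS : e \subset V by case/andP: (ok _ eE).
  by rewrite -(imset_invol inv eS) (leaf _ sE usE) imset_set2.
have tr2 := leaf_remove tr1 ssw1 leaf2.
split => //; split; first exact: symV2.
split; first by move=> x; rewrite !inE => /and3P[_ _ xV]; apply: inv.
split => e; rewrite !inE => /and3P[n2 n1 eE]; last exact: nf.
have eS : e \subset V by case/andP: (ok _ eE).
rewrite cl // andbT; apply/andP; split; apply/negP => /eqP h.
  by move: n1; rewrite -(imset_invol inv eS) h imset_set2 !inv ?eqxx.
by move: n2; rewrite -(imset_invol inv eS) h imset_set2 eqxx.
Qed.

Lemma fixed_le1_aux (T : finType) n : forall (V : {set T}) E s,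
  #|V| <= n -> symt V E s -> #|[set x in V | s x == x]| <= 1.
Proof.
elim: n => [|n IH] V E s.
  by rewrite leqn0 cards_eq0 => /eqP-> [[nz _]]; rewrite eqxx in nz.
move=> le sy.
have sub : [set x in V | s x == x] \subset V by apply/subsetP => x; rewrite inE => /andP[].
case: (leqP #|V| 1) => [le1|gt1].
  exact: leq_trans (subset_leq_card sub) le1.
case: (sy) => [tr [sV [inv _]]]; case: (tr) => [_ [ok _]].
case: (leaf_exists tr gt1) => u [w [uw leaf]].
case: (sym_leaf sy uw leaf) => suu _ _ _ sy2.
case/andP: (edge_sub ok uw) => uV _.
have suV := sV u uV.
have c1 := cardsD1 u V; have c2 := cardsD1 (s u) (V :\ u).
rewrite uV in c1; rewrite !inE suu suV /= in c2.
have le2 : #|V :\ u :\ s u| <= n by move: le; rewrite c1 c2; lia.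
apply: leq_trans (IH _ _ _ le2 sy2).
apply: subset_leq_card; apply/subsetP => x; rewrite !inE => /andP[xV /eqP sx].
rewrite xV sx eqxx !andbT; apply/andP; split.
  apply/negP => /eqP xsu; move: sx; rewrite xsu inv // => usu.
  by rewrite -usu eqxx in suu.
by apply/negP => /eqP xu; move: sx; rewrite xu => /eqP; rewrite (negbTE suu).
Qed.

Lemma fixed_le1 (T : finType) (V : {set T}) E s :
  symt V E s -> #|[set x in V | s x == x]| <= 1.
Proof. exact: fixed_le1_aux (leqnn _). Qed.

Lemma mT_swap (T : finType) (E E2 : {set {set T}}) (A R : seq {set T}) :
  uniq A -> uniq R -> {subset A <= E} -> (forall y, y \in R -> y \notin E) ->
  (forall x, (x \in E2) = ((x \in E) && (x \notin A)) || (x \in R)) ->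
  forall x, mT E x + count_mem x R = mT E2 x + count_mem x A.
Proof.
move=> uA uR sA dR mem x; rewrite /mT mem !count_uniq_mem //.
case xA: (x \in A); case xR: (x \in R); case xE: (x \in E) => //=.
all: try by rewrite (sA x) in xE.
all: by have := dR x xR; rewrite xE.
Qed.

Lemma set2_lr (T : finType) (a b c : T) : [set a; b] = [set a; c] -> b = c.
Proof. by case/set2_eq => [[_ ->]|[<- <-]]. Qed.

Lemma neq_mem (T : finType) (X Y : {set T}) z : z \in X -> z \notin Y -> X != Y.
Proof. by move=> zX zY; apply/negP => /eqP h; move: zY; rewrite -h zX. Qed.

Lemma sym_contract (T : finType) (V : {set T}) (E : {set {set T}}) (s : T -> T) v b c :
  symt V E s -> s v != v -> b != c -> [set v; b] \in E -> [set v; c] \in E ->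
  (forall e, e \in E -> v \in e -> e = [set v; b] \/ e = [set v; c]) ->
  let E2 := (((E :\ [set v; b] :\ [set v; c]) :|: [set [set b; c]])
              :\ [set s v; s b] :\ [set s v; s c]) :|: [set [set s b; s c]] in
  [/\ symt (V :\ v :\ s v) E2 s, [set b; c] \in E2, [set b; c] != [set s b; s c],
      (b \in V :\ v :\ s v) && (c \in V :\ v :\ s v) &
      forall x, mT E x + count_mem x [:: [set b; c]; [set s b; s c]] =
        mT E2 x + count_mem x [:: [set v; b]; [set s v; s b]; [set v; c]; [set s v; s c]]].
Proof.
move=> sy svv bc vb vc deg2 E2.
case: (sy) => [tr [sV [inv [cl nf]]]]; case: (tr) => [_ [ok _]].
have nvb := edge_neq ok vb; have nvc := edge_neq ok vc.
case/andP: (edge_sub ok vb) => vV bV; case/andP: (edge_sub ok vc) => _ cV.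
have svV := sV v vV; have sbV := sV b bV; have scV := sV c cV.
have bsv : b != s v.
  apply/negP => /eqP bsv; have := nf _ vb.
  by rewrite imset_set2 bsv inv // setUC eqxx.
have csv : c != s v.
  apply/negP => /eqP csv; have := nf _ vc.
  by rewrite imset_set2 csv inv // setUC eqxx.
have sbv : s b != v by rewrite -{1}(inv v vV) (inv_neq inv bV svV).
have scv : s c != v by rewrite -{1}(inv v vV) (inv_neq inv cV svV).
have sbsc : s b != s c by rewrite (inv_neq inv bV cV).
have svsbE : [set s v; s b] \in E by rewrite -imset_set2 cl.
have svscE : [set s v; s c] \in E by rewrite -imset_set2 cl.
have tr1 := contract tr bc vb vc deg2.
set E1 := (E :\ [set v; b] :\ [set v; c]) :|: [set [set b; c]] in tr1 *.
have memE1 : forall x, (x \in E1) =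
    ((x != [set v; c]) && (x != [set v; b]) && (x \in E)) || (x == [set b; c]).
  by move=> x; rewrite /E1 !inE andbA.
have v_svsb : v \notin [set s v; s b].
  by rewrite !inE negb_or !(eq_sym v) svv sbv.
have v_svsc : v \notin [set s v; s c].
  by rewrite !inE negb_or !(eq_sym v) svv scv.
have vinb : v \in [set v; b] by rewrite setU11.
have vinc : v \in [set v; c] by rewrite setU11.
have svsb1 : [set s v; s b] \in E1.
  by rewrite memE1 svsbE !andbT (eq_sym _ [set v; c]) (eq_sym _ [set v; b])
    (neq_mem vinc v_svsb) (neq_mem vinb v_svsb).
have svsc1 : [set s v; s c] \in E1.
  by rewrite memE1 svscE !andbT (eq_sym _ [set v; c]) (eq_sym _ [set v; b])
    (neq_mem vinc v_svsc) (neq_mem vinb v_svsc).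
have sv_bc : s v \notin [set b; c] by rewrite !inE negb_or !(eq_sym (s v)) bsv csv.
have deg2' : forall e, e \in E1 -> s v \in e ->
    e = [set s v; s b] \/ e = [set s v; s c].
  move=> e; rewrite memE1 => /orP[/andP[_ eE]|/eqP ->] sve; last by rewrite sve in sv_bc.
  have eS : e \subset V by case/andP: (ok _ eE).
  have ve : v \in s @: e by rewrite -(inv v vV); apply: imset_f.
  by case: (deg2 _ (cl _ eE) ve) => h; [left|right];
    rewrite -(imset_invol inv eS) h imset_set2.
have tr2 := contract tr1 sbsc svsb1 svsc1 deg2'.
have bcE : [set b; c] \notin E by apply/negP => h; apply: (triangle tr vb h vc).
have bcsbsc : [set b; c] != [set s b; s c].
  apply/negP => /eqP h; apply: (triangle tr1 svsb1 _ svsc1).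
  by rewrite -h memE1 eqxx orbT.
have sbscE : [set s b; s c] \notin E.
  apply/negP => h; have := cl _ h; rewrite imset_set2 !inv // => h'.
  by rewrite h' in bcE.
have bc_svsb : [set b; c] != [set s v; s b] by rewrite eq_sym (neq_mem (setU11 _ _)).
have bc_svsc : [set b; c] != [set s v; s c] by rewrite eq_sym (neq_mem (setU11 _ _)).
set A := [:: [set v; b]; [set s v; s b]; [set v; c]; [set s v; s c]].
set R := [:: [set b; c]; [set s b; s c]].
have memE2 : forall x, (x \in E2) = ((x \in E) && (x \notin A)) || (x \in R).
  move=> x; rewrite /E2 /E1 /A /R !inE.
  case: (eqVneq x [set b; c]) => [->|nx].
    by rewrite bc_svsb bc_svsc !orbT.
  rewrite ?(negbTE nx) /=.
  by case: (x == [set v; b]); case: (x == [set v; c]); case: (x == [set s v; s b]);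
    case: (x == [set s v; s c]); case: (x \in E); case: (x == [set s b; s c]).
have Acl : forall a, a \in A -> s @: a \in A.
  move=> a; rewrite /A !inE => /or4P[] /eqP->; rewrite imset_set2 ?inv //;
    by rewrite ?eqxx ?orbT.
have AE : {subset A <= E}.
  by move=> a; rewrite /A !inE => /or4P[] /eqP->.
have RE : forall y, y \in R -> y \notin E.
  by move=> y; rewrite /R !inE => /orP[] /eqP->.
split.
- split => //; split; first exact: symV2.
  split; first by move=> x; rewrite !inE => /and3P[_ _ xV]; apply: inv.
  split => e; rewrite memE2 => /orP[/andP[eE eA]|eR].
  + have eS : e \subset V by case/andP: (ok _ eE).
    rewrite memE2 cl //=; apply/orP; left; apply/negP => h.
    by move: (Acl _ h); rewrite (imset_invol inv eS) (negbTE eA).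
  + by rewrite memE2; move: eR; rewrite /R !inE => /orP[] /eqP->; rewrite imset_set2 ?inv // !eqxx ?orbT.
  + exact: (nf _ eE).
  + move: eR; rewrite /R !inE => /orP[] /eqP->; rewrite imset_set2 ?inv //.
      by rewrite eq_sym.
- by rewrite memE2 /R !inE eqxx orbT.
- by [].
- by rewrite !inE bsv csv (eq_sym b) (eq_sym c) nvb nvc bV cV.
apply: mT_swap => //.
- rewrite /A /= !inE !negb_or.
  rewrite (neq_mem vinb v_svsb) (neq_mem vinb v_svsc) (eq_sym [set s v; s b] [set v; c]).
  rewrite (neq_mem vinc v_svsb) (neq_mem vinc v_svsc) /= !andbT.
  apply/andP; split.
  + by apply/negP => /eqP/set2_lr h; rewrite h eqxx in bc.
  + by apply/negP => /eqP/set2_lr h; rewrite h eqxx in sbsc.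
- by rewrite /R /= inE bcsbsc.
Qed.

Lemma text0 (T : finType) (V V' : {set T}) s (m m' : {set T} -> nat) v a :
  v \notin V' -> s v \notin V' -> s v != v -> V = V' :|: [set v; s v] -> a \in V' ->
  (forall x, m x = m' x + count_mem x [:: [set v; a]; [set s v; s a]]) ->
  sym_ext 1 0 V' s m' V s m.
Proof.
move=> vV svV svv VE aV eq.
exists v, [:: a]; do 7 (split => //); first by rewrite /= aV.
by rewrite /=; split => [//|x]; rewrite addn0 eq.
Qed.

Lemma text1 (T : finType) (V V' : {set T}) s (m m' : {set T} -> nat) v b c :
  v \notin V' -> s v \notin V' -> s v != v -> V = V' :|: [set v; s v] ->
  b \in V' -> c \in V' -> 0 < m' [set b; c] -> [set b; c] != [set s b; s c] ->
  (forall x, m x + count_mem x [:: [set b; c]; [set s b; s c]] =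
     m' x + count_mem x [:: [set v; b]; [set s v; s b]; [set v; c]; [set s v; s c]]) ->
  sym_ext 1 1 V' s m' V s m.
Proof.
move=> vV svV svv VE bV cV pos neq eq.
exists v, [:: b; c]; do 7 (split => //); first by rewrite /= bV cV.
rewrite /= imset_set2 inE (negbTE neq) /=; split; first by move=> _.
by move=> x; have := eq x => /=.
Qed.

Lemma gext0 (T : finType) (V V' : {set T}) s (m m' : {set T} -> nat) v a b :
  v \notin V' -> s v \notin V' -> s v != v -> V = V' :|: [set v; s v] ->
  a \in V' -> b \in V' ->
  (forall x, m x = m' x + count_mem x
     [:: [set v; a]; [set s v; s a]; [set v; b]; [set s v; s b]]) ->
  sym_ext 2 0 V' s m' V s m.
Proof.
move=> vV svV svv VE aV bV eq.
exists v, [:: a; b]; do 7 (split => //); first by rewrite /= aV bV.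
by rewrite /=; split => [//|x]; rewrite addn0 eq.
Qed.

Lemma gext1 (T : finType) (V V' : {set T}) s (m m' : {set T} -> nat) v a b c :
  v \notin V' -> s v \notin V' -> s v != v -> V = V' :|: [set v; s v] ->
  a \in V' -> b \in V' -> c \in V' -> 0 < m' [set b; c] -> [set b; c] != [set s b; s c] ->
  (forall x, m x + count_mem x [:: [set b; c]; [set s b; s c]] =
     m' x + count_mem x [:: [set v; b]; [set s v; s b]; [set v; c]; [set s v; s c];
                         [set v; a]; [set s v; s a]]) ->
  sym_ext 2 1 V' s m' V s m.
Proof.
move=> vV svV svv VE aV bV cV pos neq eq.
exists v, [:: b; c; a]; do 7 (split => //); first by rewrite /= aV bV cV.
rewrite /= imset_set2 inE (negbTE neq) /=; split; first by move=> _.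
by move=> x; have := eq x => /=.
Qed.

Lemma deg1_leaf (T : finType) (V : {set T}) (E : {set {set T}}) v :
  edges_ok V E -> deg E v = 1 ->
  exists w, [set v; w] \in E /\ (forall e, e \in E -> v \in e -> e = [set v; w]).
Proof.
move=> ok /eqP/cards1P [e0 h].
have : e0 \in [set e in E | v \in e] by rewrite h set11.
rewrite inE => /andP[e0E ve0].
case/andP: (ok _ e0E) => e2 _.
case: (pair_of_card2 e2 ve0) => w [ew _].
exists w; rewrite -ew; split => // e eE ve.
have : e \in [set e in E | v \in e] by rewrite inE eE ve.
by rewrite h inE => /eqP.
Qed.

Lemma deg2_two (T : finType) (V : {set T}) (E : {set {set T}}) v :
  edges_ok V E -> deg E v = 2 ->
  exists b c, [/\ b != c, [set v; b] \in E, [set v; c] \in E &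
    (forall e, e \in E -> v \in e -> e = [set v; b] \/ e = [set v; c])].
Proof.
move=> ok /eqP/cards2P [e1 [e2 [ne h]]].
have : e1 \in [set e in E | v \in e] by rewrite h !inE eqxx.
rewrite inE => /andP[e1E ve1].
have : e2 \in [set e in E | v \in e] by rewrite h !inE eqxx orbT.
rewrite inE => /andP[e2E ve2].
case/andP: (ok _ e1E) => c1 _; case/andP: (ok _ e2E) => c2 _.
case: (pair_of_card2 c1 ve1) => b [eb _].
case: (pair_of_card2 c2 ve2) => c [ec _].
exists b, c; split; rewrite -?eb -?ec //.
  by apply/negP => /eqP bc; move: ne; rewrite eb ec bc eqxx.
move=> e eE ve.
have : e \in [set e in E | v \in e] by rewrite inE eE ve.
by rewrite h !inE => /orP[] /eqP->; [left|right].
Qed.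

Lemma deg_ge1 (T : finType) (V : {set T}) (E : {set {set T}}) v :
  tree' V E -> 1 < #|V| -> v \in V -> 0 < deg E v.
Proof.
case=> [_ [ok [cn _]]] /card_gt1P [x [y [xV yV xy]]] vV.
have [z [zV zv]] : exists z, z \in V /\ z != v.
  case: (eqVneq x v) => [xv|xv]; last by exists x.
  by exists y; split => //; rewrite -xv eq_sym.
case/connectP: (cn v z vV zV) => [[|z1 p] /= pth lz].
  by rewrite lz eqxx in zv.
case/andP: pth => e1 _.
rewrite /deg card_gt0; apply/set0Pn; exists [set v; z1].
by rewrite inE setU11 andbT; exact: e1.
Qed.

Lemma sum_fixed (T : finType) (V : {set T}) (s : T -> T) :
  \sum_(v in V) (s v == v) = #|[set x in V | s x == x]|.
Proof.
rewrite -sum1_card [LHS]big_mkcond [RHS]big_mkcond /=.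
by apply: eq_bigr => x _; rewrite inE; case: (x \in V); case: (s x == x).
Qed.

Lemma low_vertex (T : finType) (V : {set T}) (s : T -> T) T1 T2 :
  symt V T1 s -> symt V T2 s -> 1 < #|V| ->
  exists v, [/\ v \in V, s v != v & deg T1 v + deg T2 v <= 3].
Proof.
move=> sy1 sy2 gt1.
case: (pickP [pred v | (v \in V) && (s v != v) && (deg T1 v + deg T2 v <= 3)]) =>
  [v /andP[/andP[vV svv] d]|none]; first by exists v.
exfalso.
case: (sy1) => [tr1 _]; case: (sy2) => [tr2 _].
case: (tr1) => [_ [ok1 _]]; case: (tr2) => [_ [ok2 _]].
have c1 := tree_card tr1; have s1 := deg_sum ok1.
have c2 := tree_card tr2; have s2 := deg_sum ok2.
have f := fixed_le1 sy1.
have H : \sum_(v in V) 4 <=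
    \sum_(v in V) (deg T1 v + deg T2 v + (s v == v) + (s v == v)).
  apply: leq_sum => v vV.
  have := none v; rewrite /= vV /=.
  have := deg_ge1 tr1 gt1 vV; have := deg_ge1 tr2 gt1 vV.
  case: (s v == v) => /= g2 g1.
    by move=> _; rewrite !addn1; lia.
  by move/negbT; rewrite -ltnNge addn0; lia.
rewrite !big_split /= sum_nat_const sum_fixed s1 s2 c1 c2 in H.
lia.
Qed.

Lemma symt_of (T : finType) (V : {set T}) (E : {set {set T}}) (s : T -> T) :
  is_tree V E -> {in V, forall x, s x \in V} -> {in V, forall x, s (s x) = x} ->
  [set s @: e | e : {set T} in E] = E -> (forall e, e \in E -> s @: e != e) -> symt V E s.
Proof.
move=> /tree_tree' tr sV inv im nf; do 4 (split => //).
by move=> e eE; rewrite -im; apply: imset_f.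
Qed.

Lemma sym_mem (T : finType) (V : {set T}) (E : {set {set T}}) (s : T -> T) (e : {set T}) :
  symt V E s -> e \subset V -> (s @: e \in E) = (e \in E).
Proof.
case=> [_ [_ [inv [cl _]]]] eS; apply/idP/idP => h; last exact: cl.
by rewrite -(imset_invol inv eS); apply: cl.
Qed.

Lemma sym_image (T : finType) (V : {set T}) (E : {set {set T}}) (s : T -> T) :
  symt V E s -> [set s @: e | e : {set T} in E] = E.
Proof.
move=> sy; case: (sy) => [[_ [ok _]] [_ [inv [cl _]]]].
apply/setP => e; apply/imsetP/idP => [[e' e'E ->]|eE]; first exact: cl.
exists (s @: e); first exact: cl.
by rewrite (imset_invol inv) //; case/andP: (ok _ eE).
Qed.

Lemma edges_empty (T : finType) (x : T) (E : {set {set T}}) :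
  edges_ok [set x] E -> E = set0.
Proof.
move=> ok; apply/setP => e; rewrite inE; apply/negP => eE.
case/andP: (ok e eE) => /eqP c2 sub; have := subset_leq_card sub.
by rewrite c2 cards1.
Qed.

Lemma make_G2 (T : finType) (V : {set T}) (s : T -> T) T1 T2 :
  symt V T1 s -> symt V T2 s -> in_G2sym (SD V s T1 T2).
Proof.
move=> sy1 sy2; case: (sy1) => [tr1 [sV [inv [cl1 nf1]]]].
case: (sy2) => [tr2 [_ [_ [cl2 nf2]]]].
case: (tr1) => [nz [ok1 [cn1 _]]]; case: (tr2) => [_ [ok2 _]].
case: (leqP #|V| 1) => [le1|gt1].
  right.
  have : #|V| == 1 by rewrite eqn_leq le1 card_gt0.
  case/cards1P => x Vx; exists x; rewrite /=.
  split => //; split; first by apply: (edges_empty (x := x)); rewrite -Vx.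
  split; first by apply: (edges_empty (x := x)); rewrite -Vx.
  by have := sV x; rewrite Vx !inE => /(_ (eqxx x)) /eqP.
left; split; last first.
  by move=> e; rewrite /= inE => /orP[]; [apply: nf1 | apply: nf2].
rewrite /is_sym_2tree /=.
split; first exact/tree_tree'.
split; first exact/tree_tree'.
do 2 (split => //).
split.
  case/card_gt1P: gt1 => [x [y [xV yV xy]]].
  case/connectP: (cn1 x y xV yV) => [[|z p] /= pth ly]; first by rewrite ly eqxx in xy.
  case/andP: pth => exz _.
  case/andP: (edge_sub ok1 exz) => _ zV.
  case: (eqVneq (s x) x) => [sx|sx]; last by exists x.
  case: (eqVneq (s z) z) => [sz|sz]; last by exists z.
  by have := nf1 _ exz; rewrite imset_set2 sx sz eqxx.
split.
  by move=> e eS; rewrite /multG /= (sym_mem sy1 eS) (sym_mem sy2 eS).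
by split; [apply: (sym_image sy1) | apply: (sym_image sy2)].
Qed.

Lemma leaf_eq (T : finType) (V : {set T}) (E : {set {set T}}) (s : T -> T) v a :
  symt V E s -> [set v; a] \in E ->
  (forall e, e \in E -> v \in e -> e = [set v; a]) ->
  forall x, mT E x = mT (E :\ [set v; a] :\ [set s v; s a]) x +
                     count_mem x [:: [set v; a]; [set s v; s a]].
Proof.
move=> sy va leaf x.
case: (sym_leaf sy va leaf) => _ _ Es neq _.
have H : forall y, mT E y + count_mem y [::] =
   mT (E :\ [set v; a] :\ [set s v; s a]) y + count_mem y [:: [set v; a]; [set s v; s a]].
  apply: mT_swap => //.
  - by rewrite /= inE eq_sym neq.
  - by move=> y; rewrite !inE => /orP[]/eqP->.
  move=> y; rewrite !inE orbF.
  by case: (y == [set v; a]); case: (y == [set s v; s a]); case: (y \in E).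
by rewrite -(H x) /= addn0.
Qed.

Lemma leaf_inV (T : finType) (V : {set T}) (E : {set {set T}}) (s : T -> T) v a :
  symt V E s -> [set v; a] \in E ->
  (forall e, e \in E -> v \in e -> e = [set v; a]) -> a \in V :\ v :\ s v.
Proof.
move=> sy va leaf; case: (sym_leaf sy va leaf) => _ asv _ _ _.
case: sy => [[_ [ok _]] _].
case/andP: (edge_sub ok va) => _ aV.
by rewrite !inE asv aV eq_sym (edge_neq ok va).
Qed.

Lemma Vsplit (T : finType) (V : {set T}) (s : T -> T) v :
  {in V, forall x, s x \in V} -> v \in V -> V = V :\ v :\ s v :|: [set v; s v].
Proof.
move=> sV vV; apply/setP => x; rewrite !inE.
case: (eqVneq x v) => [->|xv]; first by rewrite vV !orbT.
case: (eqVneq x (s v)) => [->|xsv]; first by rewrite sV // !orbT.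
by rewrite /= orbF.
Qed.

Lemma sym_contract' (T : finType) (V : {set T}) (E : {set {set T}}) (s : T -> T) v b c :
  symt V E s -> s v != v -> b != c -> [set v; b] \in E -> [set v; c] \in E ->
  (forall e, e \in E -> v \in e -> e = [set v; b] \/ e = [set v; c]) ->
  exists E2,
  [/\ symt (V :\ v :\ s v) E2 s, [set b; c] \in E2, [set b; c] != [set s b; s c],
      (b \in V :\ v :\ s v) && (c \in V :\ v :\ s v) &
      forall x, mT E x + count_mem x [:: [set b; c]; [set s b; s c]] =
        mT E2 x + count_mem x [:: [set v; b]; [set s v; s b]; [set v; c]; [set s v; s c]]].
Proof. by move=> *; eexists; apply: sym_contract. Qed.

Lemma arith_LL (X : eqType) (x : X) (m1 m2 m1' m2' : nat) (A B : seq X) :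
  m1 = m1' + count_mem x A -> m2 = m2' + count_mem x B ->
  m1 + m2 = (m1' + m2') + count_mem x (A ++ B).
Proof.
rewrite count_cat => -> ->.
move: (count_mem x A) (count_mem x B) => a b; lia.
Qed.

Lemma arith_LC (X : eqType) (x : X) (m1 m2 m1' m2' : nat) (A1 A2 R : seq X) :
  m1 = m1' + count_mem x A1 -> m2 + count_mem x R = m2' + count_mem x A2 ->
  m1 + m2 + count_mem x R = (m1' + m2') + count_mem x (A2 ++ A1).
Proof.
rewrite count_cat => -> h.
move: h; move: (count_mem x A1) (count_mem x A2) (count_mem x R) => a b r; lia.
Qed.

Lemma arith_CL (X : eqType) (x : X) (m1 m2 m1' m2' : nat) (A1 A2 R : seq X) :
  m1 + count_mem x R = m1' + count_mem x A1 -> m2 = m2' + count_mem x A2 ->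
  m1 + m2 + count_mem x R = (m1' + m2') + count_mem x (A1 ++ A2).
Proof.
rewrite count_cat => h ->.
move: h; move: (count_mem x A1) (count_mem x A2) (count_mem x R) => a b r; lia.
Qed.

Lemma reduce (T : finType) (D : sd T) : is_sym_2tree D -> no_fixed_edges D ->
  exists D' j, [/\ j <= 1, in_G2sym D', #|sV D'| < #|sV D| & sym_2tree_ext j D' D].
Proof.
case: D => V s T1 T2; rewrite /is_sym_2tree /no_fixed_edges /=.
case=> [t1 [t2 [sV [inv [[x0 x0V sx0] [_ [im1 im2]]]]]]] nf.
have sy1 : symt V T1 s.
  by apply: symt_of => // e eE; apply: nf; rewrite inE eE.
have sy2 : symt V T2 s.
  by apply: symt_of => // e eE; apply: nf; rewrite inE eE orbT.
have gt1 : 1 < #|V|.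
  by apply/card_gt1P; exists x0, (s x0); split => //; [exact: sV | rewrite eq_sym].
case: (low_vertex sy1 sy2 gt1) => v [vV svv dle].
case: (sy1) => [tr1 _]; case: (sy2) => [tr2 _].
case: (tr1) => [_ [ok1 _]]; case: (tr2) => [_ [ok2 _]].
have g1 := deg_ge1 tr1 gt1 vV; have g2 := deg_ge1 tr2 gt1 vV.
set V' := V :\ v :\ s v.
have vV' : v \notin V' by rewrite !inE eqxx /= ?andbF.
have svV' : s v \notin V' by rewrite !inE eqxx.
have VE := Vsplit sV vV.
have ltV : #|V'| < #|V|.
  have c1 := cardsD1 v V; have c2 := cardsD1 (s v) (V :\ v).
  rewrite vV in c1; rewrite /V' c1 c2 /=; lia.
case: (eqVneq (deg T1 v) 1) => d1.
  case: (eqVneq (deg T2 v) 1) => d2.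
    case: (deg1_leaf ok1 d1) => a [va leafa].
    case: (deg1_leaf ok2 d2) => b [vb leafb].
    case: (sym_leaf sy1 va leafa) => _ _ _ _ sy1'.
    case: (sym_leaf sy2 vb leafb) => _ _ _ _ sy2'.
    exists (SD V' s (T1 :\ [set v; a] :\ [set s v; s a]) (T2 :\ [set v; b] :\ [set s v; s b])), 0.
    split => //=; first exact: make_G2.
    exists 0, 0; do 3 (split => //).
    split.
      apply: (gext0 vV' svV' svv VE (leaf_inV sy1 va leafa) (leaf_inV sy2 vb leafb)).
      move=> x; exact: (arith_LL (leaf_eq sy1 va leafa x) (leaf_eq sy2 vb leafb x)).
    split.
      exact: (text0 vV' svV' svv VE (leaf_inV sy1 va leafa) (leaf_eq sy1 va leafa)).
    exact: (text0 vV' svV' svv VE (leaf_inV sy2 vb leafb) (leaf_eq sy2 vb leafb)).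
  have d2' : deg T2 v = 2 by lia.
  case: (deg1_leaf ok1 d1) => a [va leafa].
  case: (sym_leaf sy1 va leafa) => _ _ _ _ sy1'.
  case: (deg2_two ok2 d2') => b [c [bc vb vc deg2]].
  case: (sym_contract' sy2 svv bc vb vc deg2) => E2 [sy2' bcE2 neq bcV ceq].
  case/andP: bcV => bV cV.
  exists (SD V' s (T1 :\ [set v; a] :\ [set s v; s a]) E2), 1.
  split => //=; first exact: make_G2.
  exists 0, 1; do 3 (split => //).
  split.
    apply: (gext1 vV' svV' svv VE (leaf_inV sy1 va leafa) bV cV _ neq).
      by rewrite /multG /= bcE2 addn1.
    move=> x; exact: (arith_LC (leaf_eq sy1 va leafa x) (ceq x)).
  split.
    exact: (text0 vV' svV' svv VE (leaf_inV sy1 va leafa) (leaf_eq sy1 va leafa)).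
  apply: (text1 vV' svV' svv VE bV cV _ neq ceq).
  by rewrite /mT bcE2.
have d1' : deg T1 v = 2 by lia.
have d2 : deg T2 v = 1 by lia.
case: (deg1_leaf ok2 d2) => a [va leafa].
case: (sym_leaf sy2 va leafa) => _ _ _ _ sy2'.
case: (deg2_two ok1 d1') => b [c [bc vb vc deg2]].
case: (sym_contract' sy1 svv bc vb vc deg2) => E1 [sy1' bcE1 neq bcV ceq].
case/andP: bcV => bV cV.
exists (SD V' s E1 (T2 :\ [set v; a] :\ [set s v; s a])), 1.
split => //=; first exact: make_G2.
exists 1, 0; do 3 (split => //).
split.
  apply: (gext1 vV' svV' svv VE (leaf_inV sy2 va leafa) bV cV _ neq).
    by rewrite /multG /= bcE1.
  move=> x; exact: (arith_CL (ceq x) (leaf_eq sy2 va leafa x)).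
split.
  apply: (text1 vV' svV' svv VE bV cV _ neq ceq).
  by rewrite /mT bcE1.
exact: (text0 vV' svV' svv VE (leaf_inV sy2 va leafa) (leaf_eq sy2 va leafa)).
Qed.

Lemma chain (T : finType) n : forall (G : sd T), #|sV G| <= n -> in_G2sym G ->
  exists (m : nat) (Gs : nat -> sd T), 1 <= m /\ is_K1 (Gs 1) /\ Gs m = G /\
    (forall i, 1 <= i <= m -> in_G2sym (Gs i)) /\
    (forall i, 2 <= i <= m ->
       exists2 j, j <= 1 & sym_2tree_ext j (Gs i.-1) (Gs i)).
Proof.
elim: n => [|n IH] G le h; case: (h) => [[sy nf]|K1].
- case: (reduce sy nf) => D' [j [_ _ lt _]].
  by move: (leq_trans lt le).
- exists 1, (fun _ => G); do 3 (split => //).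
  split; first by move=> i _.
  by move=> i /andP[a b]; have : 2 <= 1 by apply: leq_trans a b.
- case: (reduce sy nf) => D' [j [jle hD' lt ext]].
  have le' : #|sV D'| <= n by have := leq_trans lt le.
  case: (IH D' le' hD') => m [Gs [m1 [K [Gm [inG exts]]]]].
  exists m.+1, (fun i => if i <= m then Gs i else G).
  split => //; split; first by rewrite m1.
  split; first by rewrite ltnn.
  split.
    move=> i /andP[i1 im]; case: ifP => [le_im|_]; last by [].
    by apply: inG; rewrite i1 le_im.
  move=> i /andP[i2 im].
  case: (leqP i m) => [le_im|gt_im].
    have h1 : i.-1 <= m by lia.
    rewrite h1; apply: exts; by rewrite i2 le_im.
  have ei : i = m.+1 by lia.
  rewrite ei /= leqnn Gm; by exists j.
- exists 1, (fun _ => G); do 3 (split => //).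
  split; first by move=> i _.
  by move=> i /andP[a b]; have : 2 <= 1 by apply: leq_trans a b.
Qed.

Theorem corollary5p7 (T : finType) (G : sd T) :
  in_G2sym G ->
  exists (n : nat) (Gs : nat -> sd T),
    1 <= n /\ is_K1 (Gs 1) /\ sd_eq (Gs n) G /\
    (forall i, 1 <= i <= n -> in_G2sym (Gs i)) /\
    (forall i, 2 <= i <= n ->
       exists2 j, j <= 1 & sym_2tree_ext j (Gs i.-1) (Gs i)).
Proof.
move=> h; case: (chain (leqnn _) h) => n [Gs [n1 [K [Gn rest]]]].
exists n, Gs; do 2 (split => //); split => //.
by rewrite Gn; split => //; split => //.
Qed.
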